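(* Let $n,p$ be positive integers and $x_1,\dots,x_n\in\mathbb R^p$. Define $$C_{p,n}(x_1;x_2,\dots,x_n)=\begin{cases}\sup_{a\in(0,\infty)} x_1^T\,(x_1x_1^T+aI_p)^{-2}x_1, & n=1,\\[2pt] \sup_{a\in(0,\infty)^n} x_1^T\Big(x_1x_1^T+\sum_{i=2}^n a_ix_ix_i^T+a_1I_p\Big)^{-2}x_1, & n\ge2.\end{cases}$$ Then $C_{p,n}(x_1;x_2,\dots,x_n)<\infty$.
   Context: $I_p$ is the $p\times p$ identity matrix and $a=(a_1,\dots,a_n)$. *)

(* Defs.v *)
From mathcomp Require Import all_boot all_order all_algebra.
Set Implicit Arguments. Unset Strict Implicit. Unset Printing Implicit Defensive.
Import Order.TTheory GRing.Theory Num.Theory.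
Local Open Scope ring_scope.

(* The matrix  x_1 x_1^T + sum_{i>=2} a_i x_i x_i^T + a_1 I_p  (indices shifted to 0-based:
   i0 = index of x_1).  For n = 1 the sum is empty, giving x_1 x_1^T + a_1 I_p. *)
Definition Cmat (R : realFieldType) (p n : nat) (i0 : 'I_n)
  (x : 'I_n -> 'cV[R]_p) (a : 'I_n -> R) : 'M[R]_p :=
  x i0 *m (x i0)^T + \sum_(i < n | i != i0) a i *: (x i *m (x i)^T) + a i0 *: 1%:M.

Definition Cobj (R : realFieldType) (p n : nat) (i0 : 'I_n)
  (x : 'I_n -> 'cV[R]_p) (a : 'I_n -> R) : R :=
  ((x i0)^T *m (invmx (Cmat i0 x a) ^+ 2) *m x i0) ord0 ord0.

(* Main.v *)
Require Import Defs.
From mathcomp Require Import reals.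
From mathcomp Require Import all_boot all_order all_algebra.
From mathcomp Require Import ring lra.
Set Implicit Arguments. Unset Strict Implicit. Unset Printing Implicit Defensive.
Import Order.TTheory GRing.Theory Num.Theory.
Local Open Scope ring_scope.

Definition dot {R : realFieldType} {p : nat} (u w : 'cV[R]_p) : R :=
  \sum_k u k ord0 * w k ord0.

Lemma dotC {R : realFieldType} {p} (u w : 'cV[R]_p) : dot u w = dot w u.
Proof. by apply: eq_bigr => k _; rewrite mulrC. Qed.

Lemma dotDl {R : realFieldType} {p} (u v w : 'cV[R]_p) : dot (u + v) w = dot u w + dot v w.
Proof. by rewrite /dot -big_split; apply: eq_bigr => k _; rewrite mxE mulrDl. Qed.

Lemma dotBl {R : realFieldType} {p} (u v w : 'cV[R]_p) : dot (u - v) w = dot u w - dot v w.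
Proof. by rewrite /dot -sumrB; apply: eq_bigr => k _; rewrite !mxE mulrBl. Qed.

Lemma dotZl {R : realFieldType} {p} a (u w : 'cV[R]_p) : dot (a *: u) w = a * dot u w.
Proof. by rewrite /dot mulr_sumr; apply: eq_bigr => k _; rewrite mxE mulrA. Qed.

Lemma dotDr {R : realFieldType} {p} (u v w : 'cV[R]_p) : dot w (u + v) = dot w u + dot w v.
Proof. by rewrite !(dotC w) dotDl. Qed.
Lemma dotBr {R : realFieldType} {p} (u v w : 'cV[R]_p) : dot w (u - v) = dot w u - dot w v.
Proof. by rewrite !(dotC w) dotBl. Qed.
Lemma dotZr {R : realFieldType} {p} a (u w : 'cV[R]_p) : dot w (a *: u) = a * dot w u.
Proof. by rewrite !(dotC w) dotZl. Qed.
Lemma dot0r {R : realFieldType} {p} (w : 'cV[R]_p) : dot w 0 = 0.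
Proof. by rewrite /dot big1 // => k _; rewrite mxE mulr0. Qed.
Lemma dot0l {R : realFieldType} {p} (w : 'cV[R]_p) : dot 0 w = 0.
Proof. by rewrite dotC dot0r. Qed.

Lemma dot_ge0 {R : realFieldType} {p} (u : 'cV[R]_p) : 0 <= dot u u.
Proof. by apply: sumr_ge0 => k _; rewrite -expr2 sqr_ge0. Qed.

Lemma dot_eq0 {R : realFieldType} {p} (u : 'cV[R]_p) : dot u u = 0 -> u = 0.
Proof.
move=> H; apply/matrixP => k l; rewrite (ord1 l) mxE.
have /eqP : u k ord0 * u k ord0 = 0.
  by apply: (psumr_eq0P _ H) => // i _; rewrite -expr2 sqr_ge0.
by rewrite mulf_eq0 orbb => /eqP.
Qed.

Definition Pj {R : realFieldType} {p} (fj z : 'cV[R]_p) : 'cV[R]_p :=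
  z - (dot fj z / dot fj fj) *: fj.

Lemma dot_zero_any {R : realFieldType} {p} (fj z : 'cV[R]_p) :
  dot fj fj = 0 -> dot fj z = 0.
Proof. by move=> /dot_eq0 ->; rewrite dot0l. Qed.

Lemma Pj_orth {R : realFieldType} {p} (fj z : 'cV[R]_p) : dot fj (Pj fj z) = 0.
Proof.
rewrite /Pj dotBr dotZr.
have [n0|n0] := eqVneq (dot fj fj) 0.
  by rewrite n0 (dot_zero_any z n0) mul0r mulr0 subr0.
by rewrite mulfVK // subrr.
Qed.

Lemma Pj_orth_l {R : realFieldType} {p} (fj z w : 'cV[R]_p) :
  dot fj w = 0 -> dot (Pj fj z) w = dot z w.
Proof. by move=> H; rewrite /Pj dotBl dotZl H mulr0 subr0. Qed.

Lemma Pj_sym {R : realFieldType} {p} (fj a z : 'cV[R]_p) :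
  dot (Pj fj a) (Pj fj z) = dot (Pj fj a) z.
Proof. by rewrite /Pj dotBr dotZr (dotC _ fj) Pj_orth mulr0 subr0. Qed.

Lemma Pj_norm {R : realFieldType} {p} (fj z : 'cV[R]_p) :
  dot (Pj fj z) (Pj fj z) <= dot z z.
Proof.
rewrite Pj_sym {1}/Pj dotBl dotZl (dotC fj z) gerBl.
rewrite mulrAC -expr2; apply: mulr_ge0; first exact: sqr_ge0.
by rewrite invr_ge0 dot_ge0.
Qed.


Definition En {R : realFieldType} {p m : nat} (f : 'I_m -> 'cV[R]_p) (b c : 'I_m -> R) (e : R)
  (z : 'cV[R]_p) : R := \sum_i b i * (dot (f i) z - c i) ^+ 2 + e * dot z z.

Lemma decomp {R : realFieldType} {p m : nat} (f : 'I_m.+1 -> 'cV[R]_p) (j : 'I_m.+1)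
  (b c : 'I_m.+1 -> R) (e al : R) (z0 : 'cV[R]_p) :
  let u := (dot (f j) (f j))^-1 *: f j in
  dot (f j) z0 = 0 -> al * dot (f j) u = al ->
  En f b c e (al *: u + z0) =
   b j * (al - c j) ^+ 2
   + En (fun i => Pj (f j) (f (lift j i))) (fun i => b (lift j i))
        (fun i => c (lift j i) - al * dot (f (lift j i)) u) e z0
   + e * (al ^+ 2 * dot u u).
Proof.
move=> u H0 Hal.
have uz0 : dot u z0 = 0 by rewrite /u dotZl H0 mulr0.
rewrite /En (bigD1_ord j) //= dotDr dotZr Hal H0 addr0.
have -> : dot (al *: u + z0) (al *: u + z0) = al ^+ 2 * dot u u + dot z0 z0.
  rewrite !dotDl !dotDr !dotZl !dotZr (dotC z0 (f j)) H0; ring.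
under eq_bigr => i _ do rewrite dotDr dotZr.
under [in RHS]eq_bigr => i _ do rewrite (Pj_orth_l _ H0).
rewrite (eq_bigr (fun i => b (lift j i) * (dot (f (lift j i)) z0 - (c (lift j i) - al * dot (f (lift j i)) u)) ^+ 2)); last by move=> i _; congr (_ * _); ring.
ring.
Qed.


Lemma En_ge_e {R : realFieldType} {p m : nat} (f : 'I_m -> 'cV[R]_p) b c e y :
  (forall i, 0 <= b i) -> e * dot y y <= En f b c e y.
Proof.
move=> hb; rewrite /En lerDr; apply: sumr_ge0 => i _; apply: mulr_ge0 => //; exact: sqr_ge0.
Qed.

Lemma En_ge_j {R : realFieldType} {p m : nat} (f : 'I_m.+1 -> 'cV[R]_p) b c e y j :
  (forall i, 0 <= b i) -> 0 <= e ->
  b j * (dot (f j) y - c j) ^+ 2 <= En f b c e y.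
Proof.
move=> hb he; rewrite /En (bigD1_ord j) //= -addrA lerDl.
apply: addr_ge0; last by apply: mulr_ge0 => //; exact: dot_ge0.
apply: sumr_ge0 => i _; apply: mulr_ge0 => //; exact: sqr_ge0.
Qed.

Lemma En0 {R : realFieldType} {p m : nat} (f : 'I_m -> 'cV[R]_p) b c e :
  En f b c e 0 = \sum_i b i * c i ^+ 2.
Proof.
rewrite /En dot0r mulr0 addr0; apply: eq_bigr => i _; rewrite dot0r sub0r sqrrN //.
Qed.

Lemma sq_le_sum {R : realFieldType} {m : nat} (c : 'I_m -> R) j :
  c j ^+ 2 <= \sum_i c i ^+ 2.
Proof.
rewrite (bigD1 j) //= lerDl; apply: sumr_ge0 => i _; exact: sqr_ge0.
Qed.

Lemma sq_lift_le_sum {R : realFieldType} {m : nat} (c : 'I_m.+1 -> R) (j : 'I_m.+1) :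
  \sum_(i < m) c (lift j i) ^+ 2 <= \sum_i c i ^+ 2.
Proof.
rewrite [X in _ <= X](bigD1_ord j) //= lerDr; exact: sqr_ge0.
Qed.

Lemma argmax_ord {R : realFieldType} {m : nat} (b : 'I_m.+1 -> R) :
  exists j, forall i, b i <= b j.
Proof.
elim: m b => [|m IH] b.
  by exists ord0 => i; rewrite (ord1 i).
have [j Hj] := IH (fun i => b (lift ord0 i)).
have [le|lt] := lerP (b ord0) (b (lift ord0 j)).
  by exists (lift ord0 j) => i; case: (unliftP ord0 i) => [k ->|->].
exists ord0 => i; case: (unliftP ord0 i) => [k ->|->] //.
apply: le_trans (Hj k) _; exact: ltW.
Qed.

Lemma decomp_y {R : realFieldType} {p : nat} (fj y : 'cV[R]_p) :
  y = (dot fj y) *: ((dot fj fj)^-1 *: fj) + Pj fj y.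
Proof. by rewrite /Pj scalerA addrC subrK. Qed.

Lemma al_unit {R : realFieldType} {p : nat} (fj y : 'cV[R]_p) :
  dot fj y * dot fj ((dot fj fj)^-1 *: fj) = dot fj y.
Proof.
have [n0|n0] := eqVneq (dot fj fj) 0.
  by rewrite (dot_zero_any y n0) mul0r.
by rewrite dotZr mulVf // mulr1.
Qed.

Lemma dot_orth_sum {R : realFieldType} {p : nat} (a : R) (v w0 : 'cV[R]_p) :
  dot v w0 = 0 -> dot (a *: v + w0) (a *: v + w0) = a ^+ 2 * dot v v + dot w0 w0.
Proof.
move=> H; rewrite !dotDl !dotDr !dotZl !dotZr (dotC w0 v) H; ring.
Qed.


Lemma wls_bound {R : realFieldType} {p : nat} (m : nat) :
  forall f : 'I_m -> 'cV[R]_p, exists C : R, 0 <= C /\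
   forall (b c : 'I_m -> R) (e : R) (y : 'cV[R]_p),
   (forall i, 0 <= b i) -> 0 < e -> (forall z, En f b c e y <= En f b c e z) ->
   dot y y <= C * \sum_i c i ^+ 2.
Proof.
elim: m => [|m IH] f.
  exists 0; split => // b c e y hb he hmin.
  have := hmin 0; rewrite En0 big_ord0 /En big_ord0 add0r.
  rewrite pmulr_rle0 // mul0r //.
have /fin_all_exists [Cf HCf] := fun j : 'I_m.+1 => IH (fun i => Pj (f j) (f (lift j i))).
pose u j := (dot (f j) (f j))^-1 *: f j.
pose K j := \sum_i (2 * dot (f i) (u j) ^+ 2 + 2) + dot (u j) (u j).
pose G (j : 'I_m.+1) := \sum_(i < m) dot (f (lift j i)) (u j) ^+ 2.
pose D j := (2 * K j + 2) * (dot (u j) (u j) + 2 * Cf j * G j) + 2 * Cf j.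
have K0 j : 0 <= K j.
  apply: addr_ge0; last exact: dot_ge0.
  by apply: sumr_ge0 => i _; apply: addr_ge0 => //; apply: mulr_ge0 => //; exact: sqr_ge0.
have G0 j : 0 <= G j by apply: sumr_ge0 => i _; exact: sqr_ge0.
have D0 j : 0 <= D j.
  have := (HCf j).1; have := dot_ge0 (u j); have := K0 j; have := G0 j.
  rewrite /D => *; apply: addr_ge0; last by apply: mulr_ge0.
  apply: mulr_ge0; first by apply: addr_ge0 => //; apply: mulr_ge0.
  by apply: addr_ge0 => //; apply: mulr_ge0 => //; apply: mulr_ge0.
have SD0 : 0 <= \sum_j D j by apply: sumr_ge0 => j _.
exists (1 + \sum_j D j); split; first by apply: addr_ge0.
move=> b c e y hb he hmin.
set T := \sum_i c i ^+ 2.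
have T0 : 0 <= T by apply: sumr_ge0 => i _; exact: sqr_ge0.
have [j Hj] := argmax_ord b.
have [ebj|bje] := lerP (b j) e.
  have h1 : e * dot y y <= e * T.
    apply: le_trans (En_ge_e f c e y hb) _; apply: le_trans (hmin 0) _.
    rewrite En0 /T mulr_sumr; apply: ler_sum => i _; apply: ler_wpM2r; first exact: sqr_ge0.
    exact: le_trans (Hj i) ebj.
  have h2 : dot y y <= T by rewrite -(ler_pM2l he).
  apply: le_trans h2 _; rewrite mulrDl mul1r lerDl; exact: mulr_ge0.
have bj0 : 0 < b j by apply: lt_trans bje.
set al := dot (f j) y.
have hal1 : (al - c j) ^+ 2 <= K j * T.
  have H1 := En_ge_j f c y j hb (ltW he).
  have H2 := hmin (c j *: u j).
  have H3 : En f b c e (c j *: u j) <= b j * (K j * T).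
    rewrite /En /K /= mulrDl mulrDr mulr_suml mulr_sumr; apply: lerD.
      apply: ler_sum => i _; rewrite dotZr.
      have hc := sq_le_sum c i; have hcj := sq_le_sum c j.
      have hsq : (c j * dot (f i) (u j) - c i) ^+ 2 <= (2 * dot (f i) (u j) ^+ 2 + 2) * T.
        have : 0 <= (c j * dot (f i) (u j) + c i) ^+ 2 := sqr_ge0 _.
        have : 0 <= dot (f i) (u j) ^+ 2 := sqr_ge0 _.
        move: hc hcj; rewrite /T; set t := \sum_i _; nra.
      apply: ler_pM; [exact: hb | exact: sqr_ge0 | exact: Hj | exact: hsq].
    have hcj2 := sq_le_sum c j; have := dot_ge0 (u j).
    move=> hu; rewrite dotZl dotZr.
    have -> : c j * (c j * dot (u j) (u j)) = c j ^+ 2 * dot (u j) (u j) by rewrite expr2 mulrA.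
    apply: ler_pM; [exact: ltW he | exact: mulr_ge0 (sqr_ge0 _) hu | exact: ltW bje |].
    rewrite mulrC; exact: ler_wpM2l.
  have := le_trans H1 (le_trans H2 H3).
  by rewrite ler_pM2l.
have hal2 : al ^+ 2 <= (2 * K j + 2) * T.
  have := sq_le_sum c j; rewrite -/T.
  have : 0 <= (al - 2 * c j) ^+ 2 := sqr_ge0 _.
  move: hal1; set k := K j; nra.
set fp := fun i => Pj (f j) (f (lift j i)).
set bp := fun i : 'I_m => b (lift j i).
set cp := fun i : 'I_m => c (lift j i) - al * dot (f (lift j i)) (u j).
set w := Pj (f j) y.
have hy : y = al *: u j + w by exact: decomp_y.
have halu : al * dot (f j) (u j) = al by exact: al_unit.
have hminp : forall z, En fp bp cp e w <= En fp bp cp e z.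
  move=> z.
  have e1 : En fp bp cp e (Pj (f j) z) <= En fp bp cp e z.
    rewrite /En; apply: lerD.
      apply: ler_sum => i _; rewrite /fp Pj_sym //.
    by rewrite ler_pM2l //; exact: Pj_norm.
  apply: le_trans e1.
  have d1 := decomp b c e (Pj_orth (f j) z) halu.
  have d2 := decomp b c e (Pj_orth (f j) y) halu.
  rewrite -/(u j) -/w -hy in d2.
  rewrite -/(u j) in d1.
  have := hmin (al *: u j + Pj (f j) z); rewrite d1 d2 -/fp -/bp -/cp.
  by rewrite lerD2r lerD2l.
have hw := (HCf j).2 bp cp e w (fun i => hb (lift j i)) he hminp.
have hcp : \sum_i cp i ^+ 2 <= 2 * T + 2 * al ^+ 2 * G j.
  apply: le_trans (_ : \sum_(i < m) (2 * c (lift j i) ^+ 2 + 2 * al ^+ 2 * dot (f (lift j i)) (u j) ^+ 2) <= _).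
    apply: ler_sum => i _; rewrite /cp.
    have : 0 <= (c (lift j i) + al * dot (f (lift j i)) (u j)) ^+ 2 := sqr_ge0 _.
    nra.
  rewrite big_split /= -!mulr_sumr; apply: lerD => //.
  by rewrite ler_pM2l //; exact: sq_lift_le_sum.
have hyy : dot y y = al ^+ 2 * dot (u j) (u j) + dot w w.
  have uw : dot (u j) w = 0 by rewrite /u dotZl Pj_orth mulr0.
  by rewrite {1 2}hy dot_orth_sum.
have hDj : dot y y <= D j * T.
  rewrite hyy.
  have Cf0 := (HCf j).1.
  have hu := dot_ge0 (u j).
  have hG := G0 j.
  have s1 : dot w w <= Cf j * (2 * T + 2 * al ^+ 2 * G j).
    apply: le_trans hw _; exact: ler_wpM2l.
  have s2 : al ^+ 2 * dot (u j) (u j) <= (2 * K j + 2) * T * dot (u j) (u j).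
    exact: ler_wpM2r.
  have s3 : Cf j * (2 * al ^+ 2 * G j) <= Cf j * (2 * ((2 * K j + 2) * T) * G j).
    apply: ler_wpM2l => //; apply: ler_wpM2r => //; exact: ler_wpM2l.
  rewrite /D; move: s1 s2 s3; set A := al ^+ 2; set kk := K j; set uu := dot (u j) (u j).
  set gg := G j; set cc := Cf j; set ww := dot w w; nra.
apply: le_trans hDj _; apply: ler_wpM2r => //.
rewrite (bigD1 j) //= addrCA lerDl; apply: addr_ge0 => //.
by apply: sumr_ge0 => i _.
Qed.


Lemma min_of_normal {R : realFieldType} {p m : nat} (f : 'I_m -> 'cV[R]_p) b c e y :
  (forall i, 0 <= b i) -> 0 <= e ->
  (forall z, \sum_i b i * (dot (f i) y * dot (f i) z) + e * dot y z
             = \sum_i b i * (c i * dot (f i) z)) ->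
  forall z, En f b c e y <= En f b c e z.
Proof.
move=> hb he hN z.
have hs : \sum_i b i * (dot (f i) z - c i) ^+ 2 =
   \sum_i b i * (dot (f i) y - c i) ^+ 2 + \sum_i b i * (dot (f i) z - dot (f i) y) ^+ 2
   + 2 * \sum_i b i * (dot (f i) y * dot (f i) z) - 2 * \sum_i b i * (c i * dot (f i) z)
   - 2 * \sum_i b i * (dot (f i) y * dot (f i) y) + 2 * \sum_i b i * (c i * dot (f i) y).
  rewrite (eq_bigr (fun i => b i * (dot (f i) y - c i) ^+ 2 + b i * (dot (f i) z - dot (f i) y) ^+ 2
   + 2 * (b i * (dot (f i) y * dot (f i) z)) - 2 * (b i * (c i * dot (f i) z))
   - 2 * (b i * (dot (f i) y * dot (f i) y)) + 2 * (b i * (c i * dot (f i) y)))); last first.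
    by move=> i _; ring.
  by rewrite !(big_split, sumrN) /= -!mulr_sumr.
have hz := hN z; have hy := hN y.
have q0 : 0 <= \sum_i b i * (dot (f i) z - dot (f i) y) ^+ 2 + e * dot (z - y) (z - y).
  apply: addr_ge0; last by apply: mulr_ge0 => //; exact: dot_ge0.
  by apply: sumr_ge0 => i _; apply: mulr_ge0 => //; exact: sqr_ge0.
have hd : dot (z - y) (z - y) = dot z z - 2 * dot y z + dot y y.
  by rewrite !dotBl !dotBr (dotC z y); ring.
rewrite /En hs; move: q0 hz hy; rewrite hd.
set A := \sum_i _; set B := \sum_i _; set C := \sum_i _; set D := \sum_i _.
set E := \sum_i _; set F := \sum_i _.
move=> *; nra.
Qed.


Lemma tr_mul_dot {R : realFieldType} {p : nat} (u w : 'cV[R]_p) : u^T *m w = (dot u w)%:M.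
Proof.
apply/matrixP => i k; rewrite (ord1 i) (ord1 k) !mxE eqxx mulr1n.
by apply: eq_bigr => l _; rewrite mxE.
Qed.

Lemma outer_mul {R : realFieldType} {p : nat} (u w : 'cV[R]_p) :
  (u *m u^T) *m w = dot u w *: u.
Proof. by rewrite -mulmxA tr_mul_dot mul_mx_scalar. Qed.

Lemma dot_sumr {R : realFieldType} {p : nat} (I : finType) (P : pred I) (F : I -> 'cV[R]_p) z :
  dot z (\sum_(i | P i) F i) = \sum_(i | P i) dot z (F i).
Proof.
elim/big_rec2: _ => [|i s1 s2 _ <-]; [exact: dot0r | by rewrite dotDr].
Qed.

Lemma Cmat_dot {R : realFieldType} {p n : nat} (i0 : 'I_n) (x : 'I_n -> 'cV[R]_p) (a : 'I_n -> R) z w :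
  dot z (Cmat i0 x a *m w) =
  \sum_i (if i == i0 then 1 else a i) * (dot (x i) w * dot (x i) z) + a i0 * dot w z.
Proof.
rewrite /Cmat !mulmxDl mulmx_suml !dotDr outer_mul dotZr dot_sumr.
rewrite -scalemxAl mul1mx dotZr (dotC z w); congr (_ + _).
rewrite [RHS](bigD1 i0) //= eqxx mul1r (dotC z); congr (_ + _).
apply: eq_bigr => i /negPf ->; rewrite -scalemxAl outer_mul !dotZr (dotC z); ring.
Qed.

Lemma Cmat_sym {R : realFieldType} {p n : nat} (i0 : 'I_n) (x : 'I_n -> 'cV[R]_p) (a : 'I_n -> R) :
  (Cmat i0 x a)^T = Cmat i0 x a.
Proof.
rewrite /Cmat !linearD /= linear_sum /= !linearZ /= tr_scalar_mx trmx_mul trmxK.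
congr (_ + _ + _); apply: eq_bigr => i _; by rewrite linearZ /= trmx_mul trmxK.
Qed.


Theorem lemma3 (R : realType) (p n : nat) (hp : (0 < p)%N) (hn : (0 < n)%N)
  (x : 'I_n -> 'cV[R]_p) :
  exists B : R, forall a : 'I_n -> R, (forall i, 0 < a i) ->
    Cobj (Ordinal hn) x a <= B.
Proof.
set i0 := Ordinal hn.
have [C [C0 HC]] := wls_bound x.
exists C => a ha.
set M := Cmat i0 x a.
pose b i : R := if i == i0 then 1 else a i.
pose c i : R := if i == i0 then 1 else 0.
set e := a i0.
have he : 0 < e by exact: ha.
have hb : forall i, 0 <= b i by move=> i; rewrite /b; case: ifP => _ //; exact: ltW.
have hquad : forall z w, dot z (M *m w) = \sum_i b i * (dot (x i) w * dot (x i) z) + e * dot w z.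
  by move=> z w; rewrite Cmat_dot.
have Munit : M \in unitmx.
  rewrite -row_free_unit -kermx_eq0; apply/rowV0P => r /sub_kermxP rM.
  have : (r *m M)^T = 0 by rewrite rM trmx0.
  rewrite trmx_mul Cmat_sym => Mz.
  have := hquad r^T r^T; rewrite Mz dot0r => h.
  have s0 : 0 <= \sum_i b i * (dot (x i) r^T * dot (x i) r^T).
    by apply: sumr_ge0 => i _; apply: mulr_ge0 => //; rewrite -expr2 sqr_ge0.
  have d0 := dot_ge0 r^T.
  have : e * dot r^T r^T = 0.
    apply/eqP; rewrite eq_le; apply/andP; split; last exact: mulr_ge0 (ltW he) d0.
    by move: h s0; set S := \sum_i _; move=> h s0; lra.
  move/eqP; rewrite mulf_eq0 gt_eqF //= => /eqP /dot_eq0 r0.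
  by rewrite -(trmxK r) r0 trmx0.
set y := invmx M *m x i0.
have My : M *m y = x i0 by rewrite /y mulKVmx.
have hnorm : forall z, \sum_i b i * (dot (x i) y * dot (x i) z) + e * dot y z
             = \sum_i b i * (c i * dot (x i) z).
  move=> z; rewrite -hquad My (bigD1 i0) //= /b /c eqxx mul1r mul1r big1 ?addr0 ?(dotC z) //.
  by move=> i /negPf ->; rewrite mul0r mulr0.
have := HC b c e y hb he (min_of_normal hb (ltW he) hnorm).
have -> : \sum_i c i ^+ 2 = 1.
  rewrite (bigD1 i0) //= /c eqxx expr1n big1 ?addr0 //.
  by move=> i /negPf ->; rewrite expr0n.
rewrite mulr1; apply: le_trans; rewrite le_eqVlt; apply/orP; left; apply/eqP.
rewrite /Cobj expr2 -mulmxE.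
have -> : (x i0)^T *m (invmx M *m invmx M) *m x i0 = y^T *m y.
  by rewrite /y trmx_mul trmx_inv Cmat_sym !mulmxA.
by rewrite tr_mul_dot mxE eqxx mulr1n.
Qed.
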